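(* Let $(X,r)$ be a non-degenerate symmetric set with $|X|\ge2$ (not necessarily finite), $(G,r_G)$ its associated symmetric group and $(\mathcal{G},r_{\mathcal{G}})$ its permutation group. (1) $(G,r_G)$ has finite multipermutation level if and only if $(X,r)$ is a multipermutation solution; in that case, writing $m=\mathrm{mpl}(G,r_G)$, $$0\le \mathrm{mpl}(\mathcal{G},r_{\mathcal{G}})=m-1\le \mathrm{mpl}(X,r)\le \mathrm{mpl}(G,r_G)=m<\infty.$$ (2) If moreover $(X,r)$ satisfies condition ( * ), then $\mathrm{mpl}(X,r)=m<\infty$ if and only if $\mathrm{mpl}(G,r_G)=m<\infty$. In particular this holds for all square-free solutions $(X,r)$ of arbitrary cardinality.
   Context: A symmetric set is a pair $(X,r)$, $X$ nonempty, $r:X\times X\to X\times X$ a bijection $r(x,y)=({}^xy,x^y)$ that is non-degenerate (all $y\mapsto{}^xy$, $y\mapsto y^x$ bijective), involutive, and satisfies $r^{12}r^{23}r^{12}=r^{23}r^{12}r^{23}$ on $X^3$. It is square-free if $r(x,x)=(x,x)$ for all $x$. Condition ( * ): for every $x\in X$ there is $a\in X$ with ${}^ax=x$. $G=G(X,r)$ is the group generated by $X$ with relations $xy=zt$ whenever $r(x,y)=(z,t)$; $X$ embeds in $G$. A symmetric group is a pair $(G,\sigma)$, $G$ a group, $\sigma(u,v)=({}^uv,u^v)$ an involutive bijection with ${}^a1=1,{}^1u=u,1^u=1,a^1=a$, ${}^{ab}u={}^a({}^bu)$, $a^{uv}=(a^u)^v$, ${}^a(uv)=({}^au)({}^{a^u}v)$,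 $(ab)^u=(a^{{}^bu})(b^u)$, $uv=({}^uv)(u^v)$; $(G,r_G)$ is $G(X,r)$ with the unique such involutive braiding extending $r$. $\mathcal{L}:G\to\mathrm{Sym}(X)$ extends $x\mapsto(y\mapsto{}^xy)$; $\mathcal{G}=\mathcal{L}(G)$, with symmetric group structure $r_{\mathcal{G}}(\mathcal{L}_a,\mathcal{L}_b)=(\mathcal{L}_{{}^ab},\mathcal{L}_{a^b})$ (well defined since $\ker\mathcal{L}=\{a:{}^au=u\ \forall u\in G\}$). Retraction $\mathrm{Ret}(X,r)=(X/\!\sim,r_{[X]})$, $x\sim y$ iff ${}^xz={}^yz$ for all $z$, $r_{[X]}([x],[y])=([{}^xy],[x^y])$; $\mathrm{mpl}(X,r)=m$ if $m$ is minimal with $\mathrm{Ret}^m(X,r)$ a one-element set (then $(X,r)$ is a multipermutation solution); the mpl of a symmetric group is its mpl as a symmetric set. *)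

(* Defs.v *)
From Stdlib Require Import Arith ClassicalEpsilon.

Set Implicit Arguments.

Definition bij {A B : Type} (f : A -> B) : Prop :=
  (forall a b, f a = f b -> a = b) /\ (forall b, exists a, f a = b).

(* r(x,y) = (^x y, x^y), written as a curried map *)
Definition lact {X : Type} (r : X -> X -> X * X) (x y : X) : X := fst (r x y).
Definition ract {X : Type} (r : X -> X -> X * X) (x y : X) : X := snd (r x y).

Definition r12 {X : Type} (r : X -> X -> X * X) (t : X * X * X) : X * X * X :=
  match t with (a, b, c) => let (p, q) := r a b in (p, q, c) end.
Definition r23 {X : Type} (r : X -> X -> X * X) (t : X * X * X) : X * X * X :=
  match t with (a, b, c) => let (p, q) := r b c in (a, p, q) end.

Definition nondegenerate {X : Type} (r : X -> X -> X * X) : Prop :=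
  forall x, bij (fun y => lact r x y) /\ bij (fun y => ract r y x).

Definition involutive {X : Type} (r : X -> X -> X * X) : Prop :=
  forall x y, r (fst (r x y)) (snd (r x y)) = (x, y).

Definition braided {X : Type} (r : X -> X -> X * X) : Prop :=
  forall t : X * X * X, r12 r (r23 r (r12 r t)) = r23 r (r12 r (r23 r t)).

(* non-degenerate symmetric set (involutive implies r is a bijection) *)
Definition symmetric_set (X : Type) (r : X -> X -> X * X) : Prop :=
  (exists x : X, True) /\ nondegenerate r /\ involutive r /\ braided r.

Definition square_free {X : Type} (r : X -> X -> X * X) : Prop :=
  forall x, r x x = (x, x).

Definition cond_star {X : Type} (r : X -> X -> X * X) : Prop :=
  forall x, exists a, lact r a x = x.

Definition is_group {G : Type} (mul : G -> G -> G) (one : G) (inv : G -> G) : Prop :=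
  (forall a b c, mul a (mul b c) = mul (mul a b) c) /\
  (forall a, mul one a = a) /\ (forall a, mul a one = a) /\
  (forall a, mul (inv a) a = one) /\ (forall a, mul a (inv a) = one).

Definition group_hom {G H : Type} (mulG : G -> G -> G) (mulH : H -> H -> H)
  (phi : G -> H) : Prop := forall a b, phi (mulG a b) = mulH (phi a) (phi b).

(* (G, mul, one, inv) together with iota : X -> G is the group
   G(X,r) = < X | xy = zt whenever r(x,y) = (z,t) >, i.e. it satisfies the
   universal property of this presentation. *)
Definition is_structure_group (X : Type) (r : X -> X -> X * X)
  (G : Type) (mul : G -> G -> G) (one : G) (inv : G -> G) (iota : X -> G) : Prop :=
  is_group mul one inv /\
  (forall x y, mul (iota x) (iota y) = mul (iota (fst (r x y))) (iota (snd (r x y)))) /\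
  (forall (H : Type) (mulH : H -> H -> H) (oneH : H) (invH : H -> H),
     is_group mulH oneH invH ->
     forall f : X -> H,
       (forall x y, mulH (f x) (f y) = mulH (f (fst (r x y))) (f (snd (r x y)))) ->
       exists phi : G -> H,
         group_hom mul mulH phi /\ (forall x, phi (iota x) = f x) /\
         (forall psi : G -> H, group_hom mul mulH psi ->
            (forall x, psi (iota x) = f x) -> forall g, psi g = phi g)).

(* (G, sigma) is a symmetric group (braided group with involutive braiding) *)
Definition symmetric_group_braiding {G : Type} (mul : G -> G -> G) (one : G)
  (sigma : G -> G -> G * G) : Prop :=
  let la := fun u v => fst (sigma u v) in
  let ra := fun u v => snd (sigma u v) in
  involutive sigma /\
  (forall a, la a one = one) /\ (forall u, la one u = u) /\
  (forall u, ra one u = one) /\ (forall a, ra a one = a) /\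
  (forall a b u, la (mul a b) u = la a (la b u)) /\
  (forall a u v, ra a (mul u v) = ra (ra a u) v) /\
  (forall a u v, la a (mul u v) = mul (la a u) (la (ra a u) v)) /\
  (forall a b u, ra (mul a b) u = mul (ra a (la b u)) (ra b u)) /\
  (forall u v, mul u v = mul (la u v) (ra u v)).

Definition extends_braiding {X G : Type} (r : X -> X -> X * X) (iota : X -> G)
  (sigma : G -> G -> G * G) : Prop :=
  forall x y, sigma (iota x) (iota y) = (iota (fst (r x y)), iota (snd (r x y))).

(* L : G -> Sym(X) is the group homomorphism extending x |-> (y |-> ^x y)
   (composition of maps X -> X; L g is then automatically a permutation). *)
Definition is_L {X G : Type} (r : X -> X -> X * X) (mul : G -> G -> G) (one : G)
  (iota : X -> G) (L : G -> X -> X) : Prop :=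
  (forall x y, L (iota x) y = lact r x y) /\
  (forall g h y, L (mul g h) y = L g (L h y)) /\
  (forall y, L one y = y).

Record SS := mkSS { car : Type; rmap : car -> car -> car * car }.

Definition sim (A : SS) (x y : car A) : Prop :=
  forall z, fst (rmap A x z) = fst (rmap A y z).

Definition RetCar (A : SS) : Type := { P : car A -> Prop | exists x, P = sim A x }.

Definition cls (A : SS) (x : car A) : RetCar A :=
  exist _ (sim A x) (ex_intro _ x eq_refl).

Definition rep (A : SS) (c : RetCar A) : car A :=
  proj1_sig (constructive_indefinite_description _ (proj2_sig c)).

(* Ret(X,r) = (X/~, r_[X]) with r_[X]([x],[y]) = ([^x y],[x^y]) *)
Definition Ret (A : SS) : SS :=
  @mkSS (RetCar A)
    (fun c d => let a := rep c in let b := rep d in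
       (cls A (fst (rmap A a b)), cls A (snd (rmap A a b)))).

Fixpoint RetN (n : nat) (A : SS) : SS :=
  match n with O => A | Datatypes.S k => Ret (RetN k A) end.

Definition one_element (T : Type) : Prop := exists x : T, forall y : T, y = x.

Definition has_mpl (A : SS) (m : nat) : Prop :=
  one_element (car (RetN m A)) /\ forall k, k < m -> ~ one_element (car (RetN k A)).

Definition finite_mpl (A : SS) : Prop := exists m, has_mpl A m.

(* the permutation group calG = L(G), with r_calG(L_a, L_b) = (L_{^a b}, L_{a^b}) *)
Definition PermCar {X G : Type} (L : G -> X -> X) : Type :=
  { f : X -> X | exists g : G, f = L g }.

Definition prep {X G : Type} (L : G -> X -> X) (c : PermCar L) : G :=
  proj1_sig (constructive_indefinite_description _ (proj2_sig c)).

Definition Lelt {X G : Type} (L : G -> X -> X) (g : G) : PermCar L :=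
  exist _ (L g) (ex_intro _ g eq_refl).

Definition PermSS {X G : Type} (L : G -> X -> X) (sigma : G -> G -> G * G) : SS :=
  @mkSS (PermCar L)
    (fun c d => let a := prep c in let b := prep d in
       (Lelt L (fst (sigma a b)), Lelt L (snd (sigma a b)))).

(* Main.v *)
Require Import Defs.
From Stdlib Require Import Arith ZArith Lia FunctionalExtensionality ProofIrrelevance PropExtensionality ClassicalEpsilon Classical.

Lemma sig_eq' {A : Type} {P : A -> Prop} (a b : sig P) : proj1_sig a = proj1_sig b -> a = b.
Proof. destruct a, b; simpl; intro; subst; f_equal; apply proof_irrelevance. Qed.

Lemma sim_refl (B : SS) (x : car B) : sim B x x.
Proof. intro; reflexivity. Qed.
Lemma sim_sym (B : SS) (x y : car B) : sim B x y -> sim B y x.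
Proof. intros H z; symmetry; apply H. Qed.
Lemma sim_trans (B : SS) (x y z : car B) : sim B x y -> sim B y z -> sim B x z.
Proof. intros H1 H2 w; rewrite H1; apply H2. Qed.

Lemma cls_eq (B : SS) (b b' : car B) : cls B b = cls B b' <-> sim B b b'.
Proof.
  split.
  - intro H. assert (E := f_equal (@proj1_sig _ _) H). simpl in E.
    rewrite E. apply sim_refl.
  - intro H. apply sig_eq'. simpl. extensionality z. apply propositional_extensionality.
    split; intro H'. apply (sim_trans _ _ b). apply sim_sym, H. exact H'.
    apply (sim_trans _ _ b'). exact H. exact H'.
Qed.

Lemma cls_surj (B : SS) (c : RetCar B) : exists b, cls B b = c.
Proof.
  destruct c as [P [b Hb]]. exists b. apply sig_eq'. simpl. symmetry. exact Hb.
Qed.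

Lemma rep_sim (B : SS) (b : car B) : sim B b (rep (cls B b)).
Proof.
  unfold rep. destruct (constructive_indefinite_description _ _) as [x Hx]. simpl.
  simpl in Hx. rewrite Hx. apply sim_refl.
Qed.

Section RetChar.
Variable A : SS.
Variable E : nat -> car A -> car A -> Prop.
Hypothesis HEe : forall k, (forall x, E k x x) /\ (forall x y, E k x y -> E k y x) /\
  (forall x y z, E k x y -> E k y z -> E k x z).
Hypothesis HE0 : forall x y, E 0 x y <-> x = y.
Hypothesis HES : forall k x y, E (S k) x y <-> forall z, E k (fst (rmap A x z)) (fst (rmap A y z)).
Hypothesis HEc : forall k x x' z z', E k x x' -> E k z z' ->
  E k (fst (rmap A x z)) (fst (rmap A x' z')).

Lemma ret_q k : exists q : car A -> car (RetN k A),
  (forall c, exists x, q x = c) /\ (forall x y, q x = q y <-> E k x y) /\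
  (forall x z, fst (rmap (RetN k A) (q x) (q z)) = q (fst (rmap A x z))).
Proof.
  induction k as [|k IH].
  - exists (fun x => x). split; [|split].
    + intro c; exists c; reflexivity.
    + intros x y. rewrite HE0. tauto.
    + intros; reflexivity.
  - destruct IH as [q [Hs [Hq Hl]]].
    set (B := RetN k A).
    exists (fun x => cls B (q x)).
    assert (Heq : forall x y, cls B (q x) = cls B (q y) <-> E (S k) x y).
    { intros x y. rewrite cls_eq, HES. unfold sim. split.
      - intros H z. apply Hq. rewrite <- !Hl. apply H.
      - intros H w. destruct (Hs w) as [z <-]. rewrite !Hl. apply Hq, H. }
    split; [|split].
    + intro c. destruct (cls_surj B c) as [b <-]. destruct (Hs b) as [x <-]. exists x; reflexivity.
    + exact Heq.
    + intros x z. simpl.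
      destruct (Hs (rep (cls B (q x)))) as [x1 Ex1].
      destruct (Hs (rep (cls B (q z)))) as [z1 Ez1].
      fold B. rewrite <- Ex1, <- Ez1, Hl. apply Heq.
      assert (H1 : E (S k) x x1). { apply Heq, cls_eq. rewrite Ex1. apply rep_sim. }
      assert (H2 : E (S k) z z1). { apply Heq, cls_eq. rewrite Ez1. apply rep_sim. }
      apply (proj1 (proj2 (HEe (S k)))). apply HEc; assumption.
Qed.

Lemma one_char k : car A -> (one_element (car (RetN k A)) <-> forall x y, E k x y).
Proof.
  intro x0. destruct (ret_q k) as [q [Hs [Hq _]]]. split.
  - intros [c Hc] x y. apply Hq. rewrite (Hc (q x)), (Hc (q y)). reflexivity.
  - intros H. exists (q x0). intro c. destruct (Hs c) as [x <-]. apply Hq, H.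
Qed.

Lemma mpl_char m : car A -> (has_mpl A m <-> (forall x y, E m x y) /\ forall k, k < m -> ~ forall x y, E k x y).
Proof.
  intro x0. unfold has_mpl. rewrite (one_char m x0). split; intros [H1 H2]; split; auto;
  intros k Hk; specialize (H2 k Hk); rewrite (one_char k x0) in *; auto.
Qed.
End RetChar.

Lemma sig_eq {A : Type} {P : A -> Prop} (a b : sig P) : proj1_sig a = proj1_sig b -> a = b.
Proof. destruct a, b; simpl; intro; subst; f_equal; apply proof_irrelevance. Qed.

Section Inj.
Variables (X : Type) (r : X -> X -> X * X).
Hypothesis Hr : symmetric_set r.

Definition Y := X -> Z.
Definition PermY := {p : (Y -> Y) * (Y -> Y) | (forall a, fst p (snd p a) = a) /\ (forall a, snd p (fst p a) = a)}.

Lemma permY_eq (p q : PermY) : fst (proj1_sig p) = fst (proj1_sig q) -> p = q.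
Proof.
  destruct p as [[f g] [H1 H2]], q as [[f' g'] [H1' H2']]. simpl in *. intro E. subst f'.
  apply sig_eq. simpl. f_equal. extensionality b.
  rewrite <- (H1 b) at 2. rewrite H2'. reflexivity.
Qed.

Definition mulP (p q : PermY) : PermY.
Proof.
  refine (exist _ (fun a => fst (proj1_sig p) (fst (proj1_sig q) a),
                   fun a => snd (proj1_sig q) (snd (proj1_sig p) a)) _).
  destruct p as [[f g] [H1 H2]], q as [[f' g'] [H1' H2']]; simpl.
  split; intro a. rewrite H1', H1. reflexivity. rewrite H2, H2'. reflexivity.
Defined.
Definition oneP : PermY := exist _ (fun a => a, fun a => a) (conj (fun a => eq_refl) (fun a => eq_refl)).
Definition invP (p : PermY) : PermY.
Proof.
  refine (exist _ (snd (proj1_sig p), fst (proj1_sig p)) _).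
  destruct p as [[f g] [H1 H2]]; simpl. split; assumption.
Defined.

Lemma group_P : is_group mulP oneP invP.
Proof.
  split; [|split; [|split; [|split]]]; intros; apply permY_eq; simpl; try reflexivity.
  - destruct a as [[f g] [H1 H2]]; simpl. extensionality b. apply H2.
  - destruct a as [[f g] [H1 H2]]; simpl. extensionality b. apply H1.
Qed.

Lemma surjL x w : exists a, lact r x a = w.
Proof. destruct Hr as [_ [Hn _]]. apply (proj2 (proj1 (Hn x))). Qed.
Lemma injL x a b : lact r x a = lact r x b -> a = b.
Proof. destruct Hr as [_ [Hn _]]. apply (proj1 (proj1 (Hn x))). Qed.

Definition Li x w : X := proj1_sig (constructive_indefinite_description _ (surjL x w)).
Lemma L_Li x w : lact r x (Li x w) = w.
Proof. unfold Li. destruct (constructive_indefinite_description _ _). simpl. exact e. Qed.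
Lemma Li_L x w : Li x (lact r x w) = w.
Proof. apply (injL x). apply L_Li. Qed.

Definition ee (x w : X) : Z := if excluded_middle_informative (w = x) then 1%Z else 0%Z.

Definition T (x : X) : PermY.
Proof.
  refine (exist _ (fun a w => (ee x w + a (Li x w))%Z,
                   fun b w => (b (lact r x w) - ee x (lact r x w))%Z) _).
  simpl; split; intro a; extensionality w.
  - rewrite L_Li. lia.
  - rewrite Li_L. lia.
Defined.

Lemma ee_Li x y w : ee y (Li x w) = ee (lact r x y) w.
Proof.
  unfold ee. destruct (excluded_middle_informative (Li x w = y)), (excluded_middle_informative (w = lact r x y)); auto.
  - exfalso. apply n. subst. rewrite L_Li. reflexivity.
  - exfalso. apply n. subst. apply Li_L.
Qed.

Lemma braid1 x y v : lact r x (lact r y v) = lact r (lact r x y) (lact r (ract r x y) v).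
Proof.
  destruct Hr as [_ [_ [_ Hb]]]. pose proof (Hb (x, y, v)) as H.
  unfold lact, ract. unfold r12, r23 in H.
  destruct (r x y) as [z t] eqn:E1. simpl.
  destruct (r t v) as [p q] eqn:E2. destruct (r z p) as [p1 q1] eqn:E3.
  destruct (r y v) as [a b] eqn:E4. destruct (r x a) as [a1 b1] eqn:E5.
  destruct (r b1 b) as [a2 b2] eqn:E6. injection H. intros. simpl. rewrite E5, E3. simpl. congruence.
Qed.

Lemma inv1 x y : lact r (lact r x y) (ract r x y) = x.
Proof. destruct Hr as [_ [_ [Hi _]]]. unfold lact, ract. rewrite Hi. reflexivity. Qed.

Lemma T_rel x y : mulP (T x) (T y) = mulP (T (fst (r x y))) (T (snd (r x y))).
Proof.
  apply permY_eq. simpl. extensionality a. extensionality w.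
  change (fst (r x y)) with (lact r x y). change (snd (r x y)) with (ract r x y).
  set (z := lact r x y). set (t := ract r x y).
  rewrite !ee_Li. fold z. replace (lact r z t) with x by (symmetry; apply inv1).
  replace (Li y (Li x w)) with (Li t (Li z w)). lia.
  apply (injL y). apply (injL x). rewrite L_Li, L_Li.
  rewrite braid1. fold z t. rewrite L_Li, L_Li. reflexivity.
Qed.

Lemma T_inj x y : T x = T y -> x = y.
Proof.
  intro H. assert (E := f_equal (fun p => fst (proj1_sig p) (fun _ => 0%Z) x) H).
  simpl in E. unfold ee in E.
  destruct (excluded_middle_informative (x = x)); [|congruence].
  destruct (excluded_middle_informative (x = y)); auto. lia.
Qed.
End Inj.

Section SG.
Variables (G : Type) (mul : G -> G -> G) (one : G) (inv : G -> G)
  (sigma : G -> G -> G * G).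
Hypothesis Hg : is_group mul one inv.
Hypothesis Hs : symmetric_group_braiding mul one sigma.

Definition la u v := fst (sigma u v).
Definition ra u v := snd (sigma u v).

Lemma m_assoc a b c : mul a (mul b c) = mul (mul a b) c.
Proof. destruct Hg as [H _]. apply H. Qed.
Lemma m_1l a : mul one a = a.
Proof. destruct Hg as [_ [H _]]. apply H. Qed.
Lemma m_1r a : mul a one = a.
Proof. destruct Hg as [_ [_ [H _]]]. apply H. Qed.
Lemma m_invl a : mul (inv a) a = one.
Proof. destruct Hg as [_ [_ [_ [H _]]]]. apply H. Qed.
Lemma m_invr a : mul a (inv a) = one.
Proof. destruct Hg as [_ [_ [_ [_ H]]]]. apply H. Qed.

Lemma m_cancl a b c : mul a b = mul a c -> b = c.
Proof. intro H. rewrite <- (m_1l b), <- (m_1l c), <- (m_invl a), <- !m_assoc, H. reflexivity. Qed.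
Lemma m_Kl a b : mul (inv a) (mul a b) = b.
Proof. rewrite m_assoc, m_invl, m_1l. reflexivity. Qed.
Lemma m_Kl' a b : mul a (mul (inv a) b) = b.
Proof. rewrite m_assoc, m_invr, m_1l. reflexivity. Qed.
Lemma inv_one : inv one = one.
Proof. rewrite <- (m_1l (inv one)). apply m_invr. Qed.
Lemma inv_mul a b : inv (mul a b) = mul (inv b) (inv a).
Proof.
  apply (m_cancl (mul a b)). rewrite m_invr.
  rewrite <- m_assoc, (m_assoc b), m_invr, m_1l, m_invr. reflexivity.
Qed.

Lemma la_mul a b u : la (mul a b) u = la a (la b u).
Proof. destruct Hs as [_ [_ [_ [_ [_ [H _]]]]]]. apply H. Qed.
Lemma la_1l u : la one u = u.
Proof. destruct Hs as [_ [_ [H _]]]. apply H. Qed.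
Lemma la_1r a : la a one = one.
Proof. destruct Hs as [_ [H _]]. apply H. Qed.
Lemma la_mulr a u v : la a (mul u v) = mul (la a u) (la (ra a u) v).
Proof. destruct Hs as [_ [_ [_ [_ [_ [_ [_ [H _]]]]]]]]. apply H. Qed.
Lemma decomp u v : mul u v = mul (la u v) (ra u v).
Proof. destruct Hs as [_ [_ [_ [_ [_ [_ [_ [_ [_ H]]]]]]]]]. apply H. Qed.
Lemma invol u v : la (la u v) (ra u v) = u.
Proof. destruct Hs as [H _]. unfold la, ra. rewrite (H u v). reflexivity. Qed.

Lemma la_K a u : la (inv a) (la a u) = u.
Proof. rewrite <- la_mul, m_invl, la_1l. reflexivity. Qed.
Lemma la_K' a u : la a (la (inv a) u) = u.
Proof. rewrite <- la_mul, m_invr, la_1l. reflexivity. Qed.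

Definition add u v := mul u (la (inv u) v).
Definition neg u := la u (inv u).

Lemma mul_add u v : mul u v = add u (la u v).
Proof. unfold add. rewrite la_K. reflexivity. Qed.
Lemma add_1l v : add one v = v.
Proof. unfold add. rewrite inv_one, la_1l, m_1l. reflexivity. Qed.
Lemma add_1r u : add u one = u.
Proof. unfold add. rewrite la_1r, m_1r. reflexivity. Qed.
Lemma add_comm u v : add u v = add v u.
Proof.
  unfold add. set (w := la (inv u) v).
  rewrite decomp. assert (E : la u w = v) by (unfold w; apply la_K').
  rewrite E. f_equal. transitivity (la (inv v) (la v (ra u w))).
  { symmetry; apply la_K. } f_equal. rewrite <- E at 1. apply invol.
Qed.
Lemma la_add a u v : la a (add u v) = add (la a u) (la a v).
Proof.
  unfold add. rewrite la_mulr, <- la_mul. f_equal.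
  rewrite <- la_mul. f_equal.
  assert (E : ra a u = mul (inv (la a u)) (mul a u)).
  { rewrite (decomp a u), m_Kl. reflexivity. }
  rewrite E. rewrite <- !m_assoc. rewrite m_invr, m_1r. reflexivity.
Qed.
Lemma add_assoc u v w : add u (add v w) = add (add u v) w.
Proof.
  unfold add at 1. rewrite la_add.
  set (v' := la (inv u) v). set (w' := la (inv u) w).
  assert (E : add u v = mul u v') by reflexivity. rewrite E.
  unfold add. rewrite inv_mul, la_mul. fold w'. rewrite m_assoc. reflexivity.
Qed.
Lemma add_neg u : add u (neg u) = one.
Proof. unfold add, neg. rewrite la_K, m_invr. reflexivity. Qed.
Lemma add_cancl w v v' : add w v = add w v' -> v = v'.
Proof. unfold add. intro H. apply m_cancl in H. rewrite <- (la_K' w v), <- (la_K' w v'), H. reflexivity. Qed.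
Lemma la_neg a u : la a (neg u) = neg (la a u).
Proof.
  apply (add_cancl (la a u)). rewrite <- la_add, add_neg, la_1r, add_neg. reflexivity.
Qed.
Lemma neg_add u v : neg (add u v) = add (neg u) (neg v).
Proof.
  apply (add_cancl (add u v)). rewrite add_neg.
  rewrite (add_comm (neg u)), add_assoc, <- (add_assoc u v), add_neg, add_1r, add_neg. reflexivity.
Qed.
Lemma neg_one : neg one = one.
Proof. apply (add_cancl one). rewrite add_neg, add_1l. reflexivity. Qed.
Lemma add_negK u x : add (neg u) (add u x) = x.
Proof. rewrite add_assoc, (add_comm (neg u)), add_neg, add_1l. reflexivity. Qed.
Lemma add_Kneg u x : add u (add (neg u) x) = x.
Proof. rewrite add_assoc, add_neg, add_1l. reflexivity. Qed.


Definition cong (E : G -> G -> Prop) : Prop :=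
  (forall x, E x x) /\ (forall x y, E x y -> E y x) /\
  (forall x y z, E x y -> E y z -> E x z) /\
  (forall u u' v v', E u u' -> E v v' -> E (add u v) (add u' v')) /\
  (forall u v v', E v v' -> E (la u v) (la u v')) /\
  (forall u u' v, E u u' -> E (la u v) (la u' v)).

Definition Ep (E : G -> G -> Prop) u v := forall w, E (la u w) (la v w).
Definition Ip (E : G -> G -> Prop) a := forall w, E (la a w) w.

Section Cong.
Variable E : G -> G -> Prop.
Hypothesis HE : cong E.
Lemma E_refl x : E x x. Proof. destruct HE as [h _]. apply h. Qed.
Lemma E_sym x y : E x y -> E y x. Proof. destruct HE as [_ [h _]]. apply h. Qed.
Lemma E_trans x y z : E x y -> E y z -> E x z. Proof. destruct HE as [_ [_ [h _]]]. apply h. Qed.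
Lemma E_add u u' v v' : E u u' -> E v v' -> E (add u v) (add u' v'). Proof. destruct HE as [_ [_ [_ [h _]]]]. apply h. Qed.
Lemma E_la2 u v v' : E v v' -> E (la u v) (la u v'). Proof. destruct HE as [_ [_ [_ [_ [h _]]]]]. apply h. Qed.
Lemma E_la1 u u' v : E u u' -> E (la u v) (la u' v). Proof. destruct HE as [_ [_ [_ [_ [_ h]]]]]. apply h. Qed.
Lemma E_neg u u' : E u u' -> E (neg u) (neg u').
Proof.
  intro H. apply E_sym.
  rewrite <- (add_negK u (neg u')) at 1.
  rewrite <- (add_1r (neg u)) at 2.
  apply E_add. apply E_refl. rewrite <- (add_neg u').
  apply E_add. exact H. apply E_refl.
Qed.

Lemma E_Ep u v : E u v -> Ep E u v.
Proof. intros H w. apply E_la1, H. Qed.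

Lemma Ep_iff u v : Ep E u v <-> Ip E (mul (inv u) v).
Proof.
  split.
  - intros H w. rewrite la_mul. rewrite <- (la_K u w) at 2.
    apply E_la2. apply E_sym, H.
  - intros H w. rewrite <- (m_Kl' u v). rewrite la_mul.
    apply E_sym. apply E_la2. apply H.
Qed.

Lemma Ip_mul a b : Ip E a -> Ip E b -> Ip E (mul a b).
Proof. intros Ha Hb w. rewrite la_mul. eapply E_trans. apply E_la2, Hb. apply Ha. Qed.
Lemma Ip_inv a : Ip E a -> Ip E (inv a).
Proof. intros Ha w. rewrite <- (la_K' a w) at 2. apply E_sym, Ha. Qed.
Lemma Ip_conj a b : Ip E a -> Ip E (mul (mul b a) (inv b)).
Proof.
  intros Ha w. rewrite !la_mul. rewrite <- (la_K' b w) at 2. apply E_la2. apply Ha.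
Qed.
Lemma Ip_resp a a2 : Ip E a -> E a a2 -> Ip E a2.
Proof. intros Ha H w. eapply E_trans. apply E_la1, E_sym, H. apply Ha. Qed.
Lemma Ip_la a b : Ip E a -> Ip E (la b a).
Proof.
  intro Ha. apply (Ip_resp _ _ (Ip_conj a b Ha)).
  rewrite (mul_add (mul b a) (inv b)), la_mul, (mul_add b a).
  eapply E_trans. apply E_add. apply E_refl. apply E_la2. apply Ha.
  change (la b (inv b)) with (neg b).
  rewrite <- add_assoc, (add_comm (la b a) (neg b)), add_Kneg. apply E_refl.
Qed.
Lemma Ip_add a c : Ip E a -> Ip E c -> Ip E (add a c).
Proof. intros Ha Hc. unfold add. apply Ip_mul. exact Ha. apply Ip_la. exact Hc. Qed.
Lemma Ip_neg a : Ip E a -> Ip E (neg a).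
Proof. intros Ha. unfold neg. apply Ip_la, Ip_inv, Ha. Qed.

Lemma Ep_iff_add u v : Ep E u v <-> Ip E (add (neg u) v).
Proof.
  rewrite Ep_iff. split; intro H.
  - rewrite <- (m_Kl' u v), (mul_add u), add_negK. apply Ip_la, H.
  - rewrite <- (add_Kneg u v). set (c := add (neg u) v). fold c in H.
    unfold add. rewrite m_Kl. apply Ip_la, H.
Qed.

Lemma cong_Ep : cong (Ep E).
Proof.
  split; [|split; [|split; [|split; [|split]]]].
  - intros x w. apply E_refl.
  - intros x y H w. apply E_sym, H.
  - intros x y z H1 H2 w. eapply E_trans. apply H1. apply H2.
  - intros u u' v v' H1 H2. apply Ep_iff_add. apply Ep_iff_add in H1. apply Ep_iff_add in H2.
    rewrite neg_add.
    replace (add (add (neg u) (neg v)) (add u' v')) with (add (add (neg u) u') (add (neg v) v')).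
    apply Ip_add; assumption.
    rewrite <- !add_assoc. f_equal. rewrite !add_assoc. f_equal. apply add_comm.
  - intros u v v' H. apply Ep_iff. apply Ep_iff in H.
    rewrite <- (m_Kl' v v'). rewrite la_mulr, m_Kl. apply Ip_la, H.
  - intros u u' v H. apply E_Ep. apply H.
Qed.
End Cong.

Lemma cong_eq : cong eq.
Proof.
  split; [|split; [|split; [|split; [|split]]]]; intros; subst; reflexivity.
Qed.

Fixpoint EG (k : nat) : G -> G -> Prop :=
  match k with O => eq | S k' => Ep (EG k') end.

Lemma cong_EG k : cong (EG k).
Proof. induction k. apply cong_eq. apply cong_Ep, IHk. Qed.

Lemma EG_S k u v : EG k u v -> EG (S k) u v.
Proof. intros H. apply E_Ep. apply cong_EG. exact H. Qed.


Variables (X : Type) (r : X -> X -> X * X) (iota : X -> G) (L : G -> X -> X).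
Hypothesis Hr : symmetric_set r.
Hypothesis Hsg : is_structure_group r mul one inv iota.
Hypothesis Hext : extends_braiding r iota sigma.
Hypothesis HL : is_L r mul one iota L.

Lemma gen (P : G -> Prop) : P one -> (forall x, P (iota x)) ->
  (forall u v, P u -> P v -> P (mul u v)) -> (forall u, P u -> P (inv u)) -> forall g, P g.
Proof.
  intros H1 Hi Hm Hv.
  destruct Hsg as [_ [Hrel Huniv]].
  pose (mulH := fun a b : sig P => exist P (mul (proj1_sig a) (proj1_sig b)) (Hm _ _ (proj2_sig a) (proj2_sig b))).
  pose (oneH := exist P one H1).
  pose (invH := fun a : sig P => exist P (inv (proj1_sig a)) (Hv _ (proj2_sig a))).
  assert (HgH : is_group mulH oneH invH).
  { split; [|split; [|split; [|split]]]; intros; apply sig_eq; simpl.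
    apply m_assoc. apply m_1l. apply m_1r. apply m_invl. apply m_invr. }
  destruct (Huniv _ mulH oneH invH HgH (fun x => exist P (iota x) (Hi x))) as [phi [Hhom [Hphi _]]].
  { intros x y. apply sig_eq. simpl. apply Hrel. }
  destruct (Huniv _ mul one inv Hg iota Hrel) as [phi0 [_ [_ Huniq]]].
  intro g.
  assert (E1 : g = phi0 g).
  { apply (Huniq (fun g => g)); [intros a b; reflexivity | intros; reflexivity]. }
  assert (E2 : proj1_sig (phi g) = phi0 g).
  { apply (Huniq (fun g => proj1_sig (phi g))).
    intros a b; rewrite Hhom; reflexivity. intros x; rewrite Hphi; reflexivity. }
  assert (E : g = proj1_sig (phi g)) by congruence.
  rewrite E. apply proj2_sig.
Qed.

Lemma L_mul g h y : L (mul g h) y = L g (L h y).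
Proof. destruct HL as [_ [H _]]. apply H. Qed.
Lemma L_one y : L one y = y.
Proof. destruct HL as [_ [_ H]]. apply H. Qed.
Lemma L_iota x y : L (iota x) y = lact r x y.
Proof. destruct HL as [H _]. apply H. Qed.

Lemma la_iota x y : la (iota x) (iota y) = iota (lact r x y).
Proof. unfold la. rewrite Hext. reflexivity. Qed.

Lemma F1 u y : la u (iota y) = iota (L u y).
Proof.
  revert y. apply (gen (fun u => forall y, la u (iota y) = iota (L u y))).
  - intro y. rewrite la_1l, L_one. reflexivity.
  - intros x y. rewrite la_iota, L_iota. reflexivity.
  - intros a b Ha Hb y. rewrite la_mul, Hb, Ha, L_mul. reflexivity.
  - intros a Ha y.
    assert (E : y = L a (L (inv a) y)) by (rewrite <- L_mul, m_invr, L_one; reflexivity).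
    rewrite E at 1. rewrite <- Ha. apply la_K.
Qed.

Lemma iota_inj x y : iota x = iota y -> x = y.
Proof.
  intro E. destruct Hsg as [_ [Hrel Huniv]].
  destruct (Huniv _ (@mulP X) (@oneP X) (@invP X) (group_P X) (@T X r Hr)) as [phi [Hhom [Hphi _]]].
  { intros a b. apply T_rel. }
  apply (@T_inj X r Hr). rewrite <- !Hphi, E. reflexivity.
Qed.

Lemma add_gen (P : G -> Prop) : P one -> (forall x, P (iota x)) ->
  (forall a b, P a -> P b -> P (add a b)) -> (forall a, P a -> P (neg a)) -> forall g, P g.
Proof.
  intros H1 Hi Ha Hn.
  pose (Sp := fun g => forall Q : G -> Prop, Q one -> (forall x, Q (iota x)) ->
     (forall a b, Q a -> Q b -> Q (add a b)) -> (forall a, Q a -> Q (neg a)) -> Q g).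
  assert (Sla : forall a b, Sp a -> Sp (la b a)).
  { intros a b Sa Q Q1 Qi Qa Qn.
    apply (Sa (fun x => Q (la b x))).
    - rewrite la_1r. exact Q1.
    - intro x. rewrite F1. apply Qi.
    - intros c d Qc Qd. rewrite la_add. apply Qa; assumption.
    - intros c Qc. rewrite la_neg. apply Qn; assumption. }
  assert (Sadd : forall a b, Sp a -> Sp b -> Sp (add a b)).
  { intros a b Sa Sb Q Q1 Qi Qa Qn. apply Qa. apply Sa; assumption. apply Sb; assumption. }
  assert (Sneg : forall a, Sp a -> Sp (neg a)).
  { intros a Sa Q Q1 Qi Qa Qn. apply Qn. apply Sa; assumption. }
  assert (All : forall g, Sp g).
  { apply gen.
    - intros Q Q1 _ _ _. exact Q1.
    - intros x Q _ Qi _ _. apply Qi.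
    - intros u v Su Sv. rewrite mul_add. apply Sadd. exact Su. apply Sla, Sv.
    - intros u Su. replace (inv u) with (la (inv u) (neg u)).
      apply Sla, Sneg, Su. unfold neg. apply la_K. }
  intro g. apply (All g); assumption.
Qed.

Lemma Ep_gen (E : G -> G -> Prop) (HE : cong E) u v :
  Ep E u v <-> forall z, E (iota (L u z)) (iota (L v z)).
Proof.
  split.
  - intros H z. rewrite <- !F1. apply H.
  - intros H w. revert w. apply (add_gen (fun w => E (la u w) (la v w))).
    + rewrite !la_1r. apply E_refl, HE.
    + intro x. rewrite !F1. apply H.
    + intros a b Ha Hb. rewrite !la_add. apply E_add; assumption.
    + intros a Ha. rewrite !la_neg. apply E_neg; assumption.
Qed.

Lemma EG1_iff u v : EG 1 u v <-> forall z, L u z = L v z.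
Proof.
  change (EG 1 u v) with (Ep eq u v). rewrite (Ep_gen eq cong_eq).
  split; intros H z. apply iota_inj, H. rewrite H. reflexivity.
Qed.

Lemma cong_refl E (HE : cong E) x : E x x. Proof. apply (E_refl E HE). Qed.

Lemma EG_mono k u v : EG 1 u v -> EG (S k) u v.
Proof. intro H. induction k. exact H. apply EG_S, IHk. Qed.

Lemma EG_eqv k : (forall x, EG k x x) /\ (forall x y, EG k x y -> EG k y x) /\
  (forall x y z, EG k x y -> EG k y z -> EG k x z).
Proof.
  split; [|split]. apply E_refl, cong_EG. apply E_sym, cong_EG. apply E_trans, cong_EG.
Qed.

Lemma EG_compat k x x' z z' : EG k x x' -> EG k z z' -> EG k (la x z) (la x' z').
Proof.
  intros H1 H2. eapply (E_trans _ (cong_EG k)). apply (E_la2 _ (cong_EG k)), H2.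
  apply (E_la1 _ (cong_EG k)), H1.
Qed.

Lemma prep_spec (c : PermCar L) : proj1_sig c = L (prep c).
Proof. unfold prep. destruct (constructive_indefinite_description _ _). simpl. exact e. Qed.

Lemma prep_Lelt k g : EG (S k) (prep (Lelt L g)) g.
Proof. apply EG_mono, EG1_iff. intro z. rewrite <- prep_spec. reflexivity. Qed.

Definition AG k := forall u v, EG k u v.
Definition AX k := forall x y, EG k (iota x) (iota y).
Definition AP k := forall (c d : PermCar L), EG (S k) (prep c) (prep d).

Lemma AP_AG k : AP k <-> AG (S k).
Proof.
  split; intro H.
  - intros u v. pose proof (EG_eqv (S k)) as [_ [Hsy Htr]].
    apply (Htr _ (prep (Lelt L u))). apply Hsy, prep_Lelt.
    apply (Htr _ (prep (Lelt L v))). apply H. apply prep_Lelt.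
  - intros c d. apply H.
Qed.

Lemma AG_AX k : AG k -> AX k.
Proof. intros H x y. apply H. Qed.

Lemma AG_of_gens k : (forall x, EG k (iota x) one) -> AG k.
Proof.
  intro H. assert (All : forall g, EG k g one).
  { apply add_gen.
    - apply E_refl, cong_EG.
    - exact H.
    - intros a b Ha Hb. rewrite <- (add_1l one). apply (E_add _ (cong_EG k)); assumption.
    - intros a Ha. rewrite <- neg_one. apply (E_neg _ (cong_EG k)); assumption. }
  intros u v. pose proof (EG_eqv k) as [_ [Hsy Htr]]. apply (Htr _ one). apply All. apply Hsy, All.
Qed.

Lemma EGS_gen k u v : EG (S k) u v <-> forall z, EG k (iota (L u z)) (iota (L v z)).
Proof. apply Ep_gen, cong_EG. Qed.

Lemma AX_AG k : AX k -> AG (S k).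
Proof.
  intro H. apply AG_of_gens. intro x. apply EGS_gen. intro z.
  rewrite L_iota, L_one. apply H.
Qed.

Lemma AX_AG_star k : cond_star r -> AX (S k) -> AG (S k).
Proof.
  intros Hst H. apply AG_of_gens. intro x. apply EGS_gen. intro z.
  destruct (Hst z) as [a Ha]. rewrite L_one.
  pose proof (proj1 (EGS_gen k _ _) (H x a) z) as H2. rewrite !L_iota in H2.
  rewrite L_iota. rewrite Ha in H2. exact H2.
Qed.

Lemma notAG0 : (exists x y : X, x <> y) -> ~ AG 0.
Proof. intros [x [y Hxy]] H. apply Hxy, iota_inj, (H (iota x) (iota y)). Qed.
Lemma notAX0 : (exists x y : X, x <> y) -> ~ AX 0.
Proof. intros [x [y Hxy]] H. apply Hxy, iota_inj, (H x y). Qed.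

Lemma mplG m : has_mpl (@mkSS G sigma) m <-> AG m /\ forall k, k < m -> ~ AG k.
Proof.
  apply (mpl_char (@mkSS G sigma) EG).
  - apply EG_eqv.
  - intros; simpl; tauto.
  - intros; simpl; tauto.
  - intros. apply EG_compat; assumption.
  - exact one.
Qed.

Lemma mplX m : (exists x : X, True) -> has_mpl (@mkSS X r) m <-> AX m /\ forall k, k < m -> ~ AX k.
Proof.
  intros [x0 _].
  apply (mpl_char (@mkSS X r) (fun k x y => EG k (iota x) (iota y))).
  - intro k. pose proof (EG_eqv k) as [H1 [H2 H3]]. split; [|split]; eauto.
  - intros x y. simpl. split. apply iota_inj. intros ->; reflexivity.
  - intros k x y. cbv beta. cbn [rmap]. rewrite EGS_gen. split; intros H z; specialize (H z); rewrite ?L_iota in *; exact H.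
  - intros k x x' z z' H1 H2. simpl.
    change (fst (r x z)) with (lact r x z). change (fst (r x' z')) with (lact r x' z').
    rewrite <- !la_iota. apply EG_compat; assumption.
  - exact x0.
Qed.

Lemma mplP m : has_mpl (PermSS L sigma) m <-> AP m /\ forall k, k < m -> ~ AP k.
Proof.
  apply (mpl_char (PermSS L sigma) (fun k c d => EG (S k) (prep c) (prep d))).
  - intro k. pose proof (EG_eqv (S k)) as [H1 [H2 H3]]. split; [|split]; eauto.
  - intros c d. cbv beta; cbn [rmap PermSS fst snd]. rewrite EG1_iff. split.
    + intro H. apply sig_eq. rewrite !prep_spec. extensionality z. apply H.
    + intros ->. reflexivity.
  - intros k c d. cbv beta; cbn [rmap PermSS fst snd]. pose proof (EG_eqv (S k)) as [_ [Hsy Htr]]. split.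
    + intros H e. apply (Htr _ (la (prep c) (prep e))). apply prep_Lelt.
      apply (Htr _ (la (prep d) (prep e))). apply H. apply Hsy, prep_Lelt.
    + intros H w. specialize (H (Lelt L w)).
      apply (Htr _ (la (prep c) (prep (Lelt L w)))).
      apply EG_compat. apply E_refl, cong_EG. apply Hsy, prep_Lelt.
      apply (Htr _ (prep (Lelt L (la (prep c) (prep (Lelt L w)))))). apply Hsy, prep_Lelt.
      apply (Htr _ (prep (Lelt L (la (prep d) (prep (Lelt L w)))))). apply H.
      apply (Htr _ (la (prep d) (prep (Lelt L w)))). apply prep_Lelt.
      apply EG_compat. apply E_refl, cong_EG. apply prep_Lelt.
  - intros k c c' e e' H1 H2. cbv beta; cbn [rmap PermSS fst snd]. pose proof (EG_eqv (S k)) as [_ [Hsy Htr]].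
    apply (Htr _ (la (prep c) (prep e))). apply prep_Lelt.
    apply (Htr _ (la (prep c') (prep e'))). apply EG_compat; assumption. apply Hsy, prep_Lelt.
  - exact (Lelt L one).
Qed.

Lemma least (P : nat -> Prop) n : P n -> exists m, P m /\ forall k, k < m -> ~ P k.
Proof.
  induction n as [n IH] using lt_wf_ind. intro Hn.
  destruct (classic (exists k, k < n /\ P k)) as [[k [Hk Pk]]|Hno].
  - apply (IH k Hk Pk).
  - exists n. split; auto. intros k Hk Pk. apply Hno; eauto.
Qed.

Lemma main_sec : (exists x y : X, x <> y) ->
  ((finite_mpl (@mkSS G sigma) <-> finite_mpl (@mkSS X r)) /\
   (forall m, has_mpl (@mkSS G sigma) m ->
      1 <= m /\ has_mpl (PermSS L sigma) (m - 1) /\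
      exists k, has_mpl (@mkSS X r) k /\ m - 1 <= k /\ k <= m)) /\
  (cond_star r -> forall m, has_mpl (@mkSS X r) m <-> has_mpl (@mkSS G sigma) m) /\
  (square_free r -> forall m, has_mpl (@mkSS X r) m <-> has_mpl (@mkSS G sigma) m).
Proof.
  intro Hne. assert (Hx : exists x : X, True) by (destruct Hne as [x _]; eauto).
  assert (Hstar : cond_star r -> forall m, has_mpl (@mkSS X r) m <-> has_mpl (@mkSS G sigma) m).
  { intros Hst m. rewrite (mplX m Hx), mplG.
    assert (Eq : forall k, AX k <-> AG k).
    { intros [|k]. split; intro H. exfalso; apply (notAX0 Hne H). exfalso; apply (notAG0 Hne H).
      split. apply AX_AG_star, Hst. apply AG_AX. }
    split; intros [H1 H2]; split. apply Eq, H1. intros k Hk. rewrite <- Eq. auto.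
    apply Eq, H1. intros k Hk. rewrite Eq. auto. }
  split; [split|split].
  - split.
    + intros [m Hm]. apply mplG in Hm. destruct Hm as [H1 _].
      destruct (least AX m (AG_AX m H1)) as [k Hk]. exists k. apply mplX; assumption.
    + intros [k Hk]. apply (mplX k Hx) in Hk. destruct Hk as [H1 _].
      destruct (least AG (S k) (AX_AG k H1)) as [m Hm]. exists m. apply mplG; assumption.
  - intros m Hm. apply mplG in Hm. destruct Hm as [H1 H2].
    assert (Hm1 : 1 <= m).
    { destruct m. exfalso; apply (notAG0 Hne H1). lia. }
    split; [exact Hm1|split].
    + apply mplP. split.
      * apply AP_AG. replace (S (m - 1)) with m by lia. exact H1.
      * intros k Hk HP. apply AP_AG in HP. apply (H2 (S k)). lia. exact HP.
    + destruct (least AX m (AG_AX m H1)) as [k [Hk1 Hk2]]. exists k.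
      split. apply mplX; auto. split.
      * destruct (le_lt_dec (m - 1) k) as [?|Hlt]; auto. exfalso.
        apply (H2 (S k)). lia. apply AX_AG, Hk1.
      * destruct (le_lt_dec k m) as [?|Hlt]; auto. exfalso. apply (Hk2 m Hlt (AG_AX m H1)).
  - exact Hstar.
  - intros Hsf. apply Hstar. intro x. exists x. unfold lact. rewrite Hsf. reflexivity.
Qed.

End SG.

Theorem mainTheorem9 (X : Type) (r : X -> X -> X * X)
  (G : Type) (mul : G -> G -> G) (one : G) (inv : G -> G) (iota : X -> G)
  (sigma : G -> G -> G * G) (L : G -> X -> X) :
  symmetric_set r ->
  (exists x y : X, x <> y) ->
  is_structure_group r mul one inv iota ->
  symmetric_group_braiding mul one sigma ->
  extends_braiding r iota sigma ->
  is_L r mul one iota L ->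
  (* (1) *)
  ((finite_mpl (@mkSS G sigma) <-> finite_mpl (@mkSS X r)) /\
   (forall m, has_mpl (@mkSS G sigma) m ->
      1 <= m /\ has_mpl (PermSS L sigma) (m - 1) /\
      exists k, has_mpl (@mkSS X r) k /\ m - 1 <= k /\ k <= m)) /\
  (* (2) *)
  (cond_star r -> forall m, has_mpl (@mkSS X r) m <-> has_mpl (@mkSS G sigma) m) /\
  (square_free r -> forall m, has_mpl (@mkSS X r) m <-> has_mpl (@mkSS G sigma) m).
Proof.
  intros Hr Hne Hsg Hs Hext HL.
  assert (Hg : is_group mul one inv) by apply Hsg.
  exact (main_sec G mul one inv sigma Hg Hs X r iota L Hr Hsg Hext HL Hne).
Qed.
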